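(* Fix integers $n,k\ge1$ and let $E=\mathbb Z[q]/(\Phi_n(q)^k)$ and $G=\mathbb Z[e_n][x]/(x^k)$. Then: (a) $E$ and $G$ are free $\mathbb Z$-modules of the same rank $k\varphi(n)$. (b) The algebra homomorphism $\mathbb Z[q]\to\mathbb Z[e_n][x]$, $q\mapsto e_n+x$, descends to an algebra homomorphism $h:E\to G$, and $h$ is injective.
   Context: $\Phi_n(q)$ is the $n$th cyclotomic polynomial, $\varphi$ is Euler's totient function, and $e_n=\exp(2\pi i/n)$. *)

(* Defs.v *)
From HB Require Import structures.
From Stdlib Require Import ClassicalEpsilon.
From mathcomp Require Import all_boot all_order all_algebra all_field.
Set Implicit Arguments. Unset Strict Implicit. Unset Printing Implicit Defensive.
Import Order.TTheory GRing.Theory Num.Theory.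
Local Open Scope ring_scope.

Definition pbool (P : Prop) : bool :=
  if excluded_middle_informative P then true else false.

Lemma pboolP (P : Prop) : reflect P (pbool P).
Proof. by rewrite /pbool; case: excluded_middle_informative => h; constructor. Qed.

(* e_n = exp(2 pi i / n), realised in algC as the square of n.-root (-1),
   the root of z^n = -1 of least nonnegative argument (pi/n). *)
Definition e_ (n : nat) : algC := (n.-root (-1)) ^+ 2.

Definition Zen_pred (n : nat) : {pred algC} :=
  fun z => pbool (exists p : {poly int}, z = (map_poly intr p).[e_ n]).

Lemma Zen_subring_closed n : subring_closed (Zen_pred n).
Proof.
split.
- apply/pboolP; exists 1; by rewrite rmorph1 hornerC.
- move=> x y /pboolP[p ->] /pboolP[q ->]; apply/pboolP; exists (p - q).
  by rewrite rmorphB hornerD hornerN.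
- move=> x y /pboolP[p ->] /pboolP[q ->]; apply/pboolP; exists (p * q).
  by rewrite rmorphM hornerM.
Qed.

HB.instance Definition _ n :=
  GRing.isSubringClosed.Build algC (Zen_pred n) (Zen_subring_closed n).

Record Zen (n : nat) := ZenOf { zen_val :> algC; _ : zen_val \in Zen_pred n }.

HB.instance Definition _ n := [isSub for @zen_val n].
HB.instance Definition _ n := [Choice of Zen n by <:].
HB.instance Definition _ n := [SubChoice_isSubComNzRing of Zen n by <:].

Lemma e_in_Zen n : e_ n \in Zen_pred n.
Proof. by apply/pboolP; exists 'X; rewrite map_polyX hornerX. Qed.

Definition eZ (n : nat) : Zen n := ZenOf (e_in_Zen n).

Definition E_mod (n k : nat) : {poly int} := 'Phi_n ^+ k.
Definition E_ring (n k : nat) := {poly %/ E_mod n k}.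

Definition G_mod (n k : nat) : {poly Zen n} := 'X^k.
Definition G_ring (n k : nat) := {poly %/ G_mod n k}.

Definition shift_map (n : nat) (p : {poly int}) : {poly Zen n} :=
  (map_poly intr p) \Po ('X + (eZ n)%:P).

Definition free_Zmod_of_rank (V : zmodType) (r : nat) : Prop :=
  exists b : 'I_r -> V, forall v : V,
    exists! c : {ffun 'I_r -> int}, v = \sum_(i < r) b i *~ c i.

(* Main.v *)
Require Import Defs.
From HB Require Import structures.
From mathcomp Require Import all_boot all_order all_algebra all_field.
Import GRing.Theory.
Local Open Scope ring_scope.
Import Order.TTheory Num.Theory.

Lemma normC_sub1 (u : algC) : `|u| = 1 -> `|u - 1| ^+ 2 = 2 - 2 * 'Re u.
Proof.
move=> hu; have h : u * u^* = 1 by rewrite -normCK hu expr1n.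
rewrite normCK rmorphB /= conjC1 mulrBl !mulrBr h mulr1 mul1r ReE.
rewrite [2 * _]mulrC divfK ?pnatr_eq0 //.
rewrite opprB addrA -[2]/(1 + 1) opprD addrA; congr (_ - _).
by rewrite mulr1 addrAC.
Qed.

Lemma norm1_Re_lt (u v : algC) : `|u| = 1 -> `|v| = 1 ->
  `|u - 1| < `|v - 1| -> 'Re v < 'Re u.
Proof.
move=> hu hv huv.
have : `|u - 1| ^+ 2 < `|v - 1| ^+ 2.
  by rewrite ltr_pXn2r // ?qualifE /= normr_ge0.
rewrite !normC_sub1 // ltrD2l ltrN2 => h.
by rewrite -(ltr_pM2l (_ : 0 < 2)) ?ltr0n.
Qed.

Lemma e_prim n : (0 < n)%N -> n.-primitive_root (e_ n).
Proof.
move=> n0.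
rewrite /e_; set r := n.-root (-1).
have rn : r ^+ n = -1 by rewrite /r rootCK.
have N1 : (-1 : algC) != 1.
  by rewrite -subr_eq0 -opprD oppr_eq0 (_ : 1 + 1 = 2%:R) // pnatr_eq0.
have r2n : r ^+ (2 * n) = 1 by rewrite mulnC exprM rn sqrrN expr1n.
have n2 : (0 < 2 * n)%N by rewrite muln_gt0.
have [d pd dd] := prim_order_exists n2 r2n.
suff d2n : d = (2 * n)%N.
  rewrite d2n in pd; have := exp_prim_root pd 2.
  by rewrite gcdnMr mulKn.
have d0 := prim_order_gt0 pd.
have ndn : ~~ (d %| n)%N by rewrite (prim_order_dvd pd) rn.
have ev : ~~ odd d.
  apply: contra ndn => od.
  by rewrite -(@Gauss_dvdr d 2 n) ?coprimen2.
set m := d./2.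
have dm : d = (2 * m)%N.
  by rewrite -[LHS]odd_double_half (negbTE ev) add0n -mul2n.
have m0 : (0 < m)%N by move: d0; rewrite dm muln_gt0.
have mn : (m %| n)%N by rewrite -(@dvdn_pmul2l 2) // -dm.
set t := (n %/ m)%N.
have nt : n = (t * m)%N by rewrite divnK.
have t0 : (0 < t)%N by move: n0; rewrite nt muln_gt0 => /andP[].
case: (ltngtP t 1) => [|t1|t1]; first by rewrite ltnS leqn0 => /eqP t00; rewrite t00 in t0.
  exfalso.
  have rm : r ^+ m = -1.
    have : (r ^+ m) ^+ 2 == 1 by rewrite -exprM mulnC -dm prim_expr_order.
    rewrite sqrf_eq1 => /orP[|/eqP//].
    rewrite -(prim_order_dvd pd) => /(dvdn_leq m0).
    by rewrite dm -{2}(mul1n m) leq_pmul2r // ltnn.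
  have [w pw] := C_prim_root_exists t0.
  pose y0 := t.-root r.
  have y0t : y0 ^+ t = r by rewrite /y0 rootCK.
  pose y (j : 'I_t) := y0 * w ^+ j.
  have yt j : y j ^+ t = r.
    by rewrite exprMn y0t exprAC (prim_expr_order pw) expr1n mulr1.
  have yn j : y j ^+ n = -1 by rewrite nt exprM yt rm.
  pose Q (z : algC) := \sum_(i < t) z ^+ i.
  have yQ j : (y j - 1) * Q (y j) = r - 1 by rewrite -subrX1 yt.
  have geo (i : 'I_t) : \sum_(j < t) (w ^+ i) ^+ j = if (i : nat) == 0%N then t%:R else 0.
    case: eqP => [->|i0].
      under eq_bigr do rewrite expr0 expr1n.
      by rewrite sumr_const card_ord.
    have wi1 : w ^+ i != 1.
      have i0' : (0 < i)%N by rewrite lt0n; apply/eqP.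
      rewrite -(prim_order_dvd pw); apply/negP => /(dvdn_leq i0').
      by rewrite leqNgt ltn_ord.
    have := subrX1 (w ^+ i) t.
    rewrite exprAC (prim_expr_order pw) expr1n subrr => /esym/eqP.
    by rewrite mulf_eq0 subr_eq0 (negbTE wi1) /= => /eqP.
  have sumQ : \sum_(j < t) Q (y j) = t%:R.
    rewrite /Q exchange_big /=.
    under eq_bigr => i _ do under eq_bigr => j _ do
      rewrite exprMn -exprM mulnC exprM.
    under eq_bigr => i _ do rewrite -mulr_sumr geo.
    rewrite (bigD1 (Ordinal t0)) //= expr0 mul1r big1 ?addr0 //.
    move=> i /negPf; rewrite -val_eqE /= => ->; exact: mulr0.
  have normy j : `|y j| = 1.
    apply/eqP; rewrite -(pexpr_eq1 n0) ?normr_ge0 // -normrX yn normrN normr1 //.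
  have nr : `|r| = 1.
    apply/eqP; rewrite -(pexpr_eq1 n0) ?normr_ge0 // -normrX rn normrN normr1 //.
  have r1 : r - 1 != 0.
    by rewrite subr_eq0; apply: contra N1 => /eqP r1; rewrite -rn r1 expr1n.
  have [[j Qj] | allQ] : (exists j, 1 < `|Q (y j)|) \/ (forall j, `|Q (y j)| <= 1).
    case: (boolP [exists j, 1 < `|Q (y j)|]) => [/existsP h|/existsPn h]; first by left.
    by right=> j; rewrite real_leNgt ?h ?normr_real ?real1.
  - have lt1 : `|y j - 1| < `|r - 1|.
      rewrite -(yQ j) normrM ltr_pMr //.
      rewrite normr_gt0; apply: contraNneq r1 => h.
      by rewrite -(yQ j) h mul0r.
    have Rlt := norm1_Re_lt (y j) r (normy j) nr lt1.
    have ImR : 'Im (y j) \is Num.real by apply: Creal_Im.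
    case: (real_ge0P ImR) => hI.
      by have := rootC_Re_max n0 (yn j) hI; move/(lt_le_trans Rlt); rewrite ltxx.
    have yn' : (y j)^* ^+ n = -1 by rewrite -rmorphXn yn rmorphN1.
    have hI' : 0 <= 'Im ((y j)^*) by rewrite Im_conj oppr_ge0 ltW.
    by have := rootC_Re_max n0 yn' hI'; rewrite Re_conj => /(lt_le_trans Rlt); rewrite ltxx.
  - have Q1 j : Q (y j) = 1.
      apply: (@normC_sum_upper _ _ predT (fun j => Q (y j)) (fun _ => 1)) => //.
      by rewrite sumQ sumr_const card_ord.
    have yr j : y j = r by have := yQ j; rewrite Q1 mulr1 => /addIr.
    have t1' : (1 < t)%N by [].
    have := yr (Ordinal t1'); rewrite -(yr (Ordinal t0)) /y /= expr0 mulr1 expr1.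
    have y00 : y0 != 0.
      apply/negP => /eqP y00; move: rn; rewrite -y0t y00 expr0n (gtn_eqF t0).
      by rewrite expr0n (gtn_eqF n0) => /eqP; rewrite eq_sym oppr_eq0 oner_eq0.
    rewrite -{2}(mulr1 y0) => /(mulfI y00) w1.
    by have := prim_order_dvd pw 1; rewrite expr1 w1 eqxx dvdn1 (gtn_eqF t1).
by rewrite dm nt t1 mul1n.
Qed.

Lemma free_of (V : zmodType) (I : finType) (b : I -> V) :
  (forall v, exists c : I -> int, v = \sum_i b i *~ c i) ->
  (forall c : I -> int, \sum_i b i *~ c i = 0 -> forall i, c i = 0) ->
  free_Zmod_of_rank V #|I|.
Proof.
move=> hex hind.
have reidx (F : I -> V) : \sum_i F i = \sum_(k < #|I|) F (enum_val k).
  exact: (big_enum_val (A := predT)).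
exists (fun k => b (enum_val k)) => v.
have [c ->] := hex v.
exists [ffun k => c (enum_val k)]; split.
  by rewrite reidx; apply: eq_bigr => k _; rewrite ffunE.
move=> c' hc'.
have h0 : \sum_i b i *~ (c i - c' (enum_rank i)) = 0.
  under eq_bigr do rewrite mulrzBr.
  rewrite sumrB hc' reidx; apply/eqP; rewrite subr_eq0; apply/eqP.
  by apply: eq_bigr => k _; rewrite enum_valK.
apply/ffunP => k; rewrite ffunE.
have := hind _ h0 (enum_val k); rewrite enum_valK => /eqP; rewrite subr_eq0 => /eqP.
by [].
Qed.

Section NpolyFree.
Variables (R : nzRingType) (d r : nat) (f : 'I_r -> R).
Hypothesis hex : forall x : R, exists c : 'I_r -> int, x = \sum_j f j *~ c j.
Hypothesis hind : forall c : 'I_r -> int, \sum_j f j *~ c j = 0 -> forall j, c j = 0.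

Let b (p : 'I_d * 'I_r) : {poly_d R} := npolyp d ((f p.2)%:P * 'X^(p.1)).

Lemma coef_bsum (c : 'I_d * 'I_r -> int) m (hm : (m < d)%N) :
  (\sum_p b p *~ c p : {poly_d R})`_m = \sum_j f j *~ c (Ordinal hm, j).
Proof.
rewrite (raddf_sum (polyn (n:=d))) coef_sum.
under eq_bigr => p _ do
  rewrite (raddfMz (polyn (n:=d))) coefMrz /= coef_npolyp hm coefCM coefXn.
pose F := fun (i : 'I_d) (j : 'I_r) => (f j * (m == i)%:R) *~ c (i, j).
transitivity (\sum_(p : 'I_d * 'I_r) F p.1 p.2); first by apply: eq_bigr => -[i j] _.
rewrite -[LHS](pair_big predT predT F) /= /F.
rewrite (bigD1 (Ordinal hm)) //= [X in _ + X]big1 ?addr0.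
  by apply: eq_bigr => j _; rewrite eqxx mulr1.
move=> i /negPf; rewrite -val_eqE /= eq_sym => ->.
by apply: big1 => j _; rewrite mulr0 mul0rz.
Qed.

Lemma npoly_free : free_Zmod_of_rank {poly_d R} (d * r).
Proof.
have := @free_of {poly_d R} ('I_d * 'I_r)%type b.
rewrite card_prod !card_ord; apply.
  move=> v.
  have [c hc] : exists c : 'I_d -> 'I_r -> int, forall i : 'I_d, (v : {poly R})`_i = \sum_j f j *~ c i j.
    exact: (fin_all_exists (fun i : 'I_d => hex ((v : {poly R})`_i))).
  exists (fun p => c p.1 p.2); apply/npolyP => m.
  have [hm | hm] := ltnP m d.
    by rewrite (coef_bsum _ _ hm) (hc (Ordinal hm)).
  by rewrite !big_coef_npoly.
move=> c h0 [i j].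
have := coef_bsum c _ (ltn_ord i); rewrite h0 coef0 => /esym /hind /(_ j).
by have -> : Ordinal (ltn_ord i) = i by apply: val_inj.
Qed.

End NpolyFree.
Import Pdiv.CommonRing Pdiv.RingMonic.

Section ZenBasis.
Variable n : nat.
Hypothesis hn : (0 < n)%N.
Local Notation phi := (totient n).

Lemma PhiC : map_poly (intr : int -> algC) 'Phi_n = cyclotomic (e_ n) n.
Proof. have := Cintr_Cyclotomic (@e_prim n hn). by []. Qed.

Lemma Phi_root : root (map_poly (intr : int -> algC) 'Phi_n) (e_ n).
Proof. by rewrite PhiC root_cyclotomic (@e_prim n hn). Qed.

Lemma indep (q : {poly int}) : (size q <= phi)%N ->
  (map_poly (intr : int -> algC) q).[e_ n] = 0 -> q = 0.
Proof.
have [pf [Dpf mon] dv] := minCpolyP (e_ n).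
have szpf : size pf = phi.+1.
  rewrite -(size_map_inj_poly (f := ratr : rat -> algC)) ?rmorph0 //; last exact: fmorph_inj.
  by rewrite -Dpf (minCpoly_cyclotomic (@e_prim n hn)) size_cyclotomic.
move=> sq hq; apply/eqP; apply: contraT => q0.
pose qQ := map_poly (intr : int -> rat) q.
have szQ : size qQ = size q by rewrite size_map_inj_poly //; exact: intr_inj.
have qQ0 : qQ != 0 by rewrite -size_poly_eq0 szQ size_poly_eq0.
have : pf %| qQ.
  rewrite -dv.
  have -> : map_poly ratr qQ = map_poly (intr : int -> algC) q.
    by rewrite -map_poly_comp; apply: eq_map_poly => x /=; rewrite ratr_int.
  by rewrite /root hq.
move/(dvdp_leq qQ0); rewrite szpf szQ => /leq_trans/(_ sq).
by rewrite ltnn.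
Qed.

Lemma span (z : Zen n) : exists q : {poly int},
  (size q <= phi)%N /\ (z : algC) = (map_poly (intr : int -> algC) q).[e_ n].
Proof.
case: z => z hz /=; have [p ->] := pboolP _ hz.
exists (rmodp p 'Phi_n); split.
  rewrite -ltnS -size_Cyclotomic ltn_rmodpN0 // monic_neq0 //.
  exact: Cyclotomic_monic.
rewrite {1}(rdivp_eq (Cyclotomic_monic n) p) rmorphD rmorphM /= hornerD hornerM.
by rewrite (rootP Phi_root) mulr0 add0r.
Qed.

Lemma eZ_val : (eZ n : algC) = e_ n. Proof. by []. Qed.

Lemma Zen_sum (c : 'I_phi -> int) :
  val (\sum_(j < phi) eZ n ^+ j *~ c j : Zen n)
  = (map_poly (intr : int -> algC) (\poly_(i < phi) oapp c 0 (insub i))).[e_ n].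
Proof.
rewrite rmorph_sum (horner_coef_wide _ (n := phi)); last first.
  rewrite size_map_inj_poly ?size_poly //; exact: intr_inj.
apply: eq_bigr => i _.
rewrite rmorphMz rmorphXn coef_map coef_poly ltn_ord valK /=.
by rewrite mulrzl.
Qed.

Lemma Zen_exists (z : Zen n) : exists c : 'I_phi -> int,
  z = \sum_(j < phi) eZ n ^+ j *~ c j.
Proof.
have [q [sq hq]] := span z.
exists (fun j => q`_j); apply: val_inj; rewrite Zen_sum -[val z]/(zen_val z) hq /=.
congr (_.[_]); congr (map_poly _ _); apply/polyP => i.
rewrite coef_poly; case: ltnP => hi; first by rewrite insubT.
by rewrite nth_default // (leq_trans sq hi).
Qed.

Lemma Zen_indep (c : 'I_phi -> int) :
  \sum_(j < phi) eZ n ^+ j *~ c j = 0 -> forall j, c j = 0.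
Proof.
move=> /(congr1 val); rewrite Zen_sum /= => h0 j.
have := congr1 (fun p : {poly int} => p`_j) (indep _ (size_poly _ _) h0).
by rewrite coef_poly ltn_ord valK coef0.
Qed.

End ZenBasis.

Lemma sizeE n k : (0 < n)%N -> (0 < k)%N ->
  size (E_mod n k) = (k * totient n).+1.
Proof.
move=> hn hk.
have m : E_mod n k \is monic by apply: monic_exp; exact: Cyclotomic_monic.
have := size_exp ('Phi_n) k; rewrite size_Cyclotomic /= mulnC => <-.
by rewrite prednK // size_poly_gt0 monic_neq0.
Qed.

Lemma mkE n k : (0 < n)%N -> (0 < k)%N -> mk_monic (E_mod n k) = E_mod n k.
Proof.
move=> hn hk; rewrite /mk_monic sizeE // ltnS muln_gt0 hk totient_gt0 hn /=.
by rewrite monic_exp // Cyclotomic_monic.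
Qed.

Lemma E_free n k : (0 < n)%N -> (0 < k)%N ->
  free_Zmod_of_rank (E_ring n k) (k * totient n).
Proof.
move=> hn hk.
have := @npoly_free int (size (mk_monic (E_mod n k))).-1 1 (fun _ => 1).
rewrite muln1 [in X in free_Zmod_of_rank _ X]mkE // [in X in free_Zmod_of_rank _ X]sizeE //=; apply.
  by move=> x; exists (fun _ => x); rewrite big_ord1 intz.
by move=> c; rewrite big_ord1 intz => h j; rewrite ord1.
Qed.

Lemma G_free n k : (0 < n)%N -> (0 < k)%N ->
  free_Zmod_of_rank (G_ring n k) (k * totient n).
Proof.
move=> hn hk.
have := @npoly_free (Zen n) (size (mk_monic (G_mod n k))).-1 (totient n) (fun j => eZ n ^+ j).
rewrite [in X in free_Zmod_of_rank _ X]/G_mod [in X in free_Zmod_of_rank _ X]mk_monic_Xn [in X in free_Zmod_of_rank _ X]size_polyXn /= prednK //; apply.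
  exact: Zen_exists.
exact: Zen_indep.
Qed.

Lemma comp_polyXn_gen (R : comNzRingType) (p q : {poly R}) j :
  (p ^+ j) \Po q = (p \Po q) ^+ j.
Proof.
elim: j => [|j IH]; first by rewrite !expr0 -polyC1 comp_polyC.
by rewrite !exprS comp_polyM IH.
Qed.

Section Shift.
Variable n : nat.

Lemma shiftD p q : shift_map n (p + q) = shift_map n p + shift_map n q.
Proof. by rewrite /shift_map rmorphD comp_polyD. Qed.


Lemma shiftB p q : shift_map n (p - q) = shift_map n p - shift_map n q.
Proof. by rewrite /shift_map rmorphB comp_polyB. Qed.
Lemma shiftM p q : shift_map n (p * q) = shift_map n p * shift_map n q.
Proof. by rewrite /shift_map rmorphM comp_polyM. Qed.
Lemma shift1 : shift_map n 1 = 1.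
Proof. by rewrite /shift_map rmorph1 -polyC1 comp_polyC. Qed.
Lemma shiftX p j : shift_map n (p ^+ j) = shift_map n p ^+ j.
Proof. by rewrite /shift_map rmorphXn comp_polyXn_gen. Qed.

Lemma map_shift p : map_poly (val : Zen n -> algC) (shift_map n p)
  = map_poly (intr : int -> algC) p \Po ('X + (e_ n)%:P).
Proof.
rewrite /shift_map map_comp_poly; congr (_ \Po _).
  by apply/polyP => i; rewrite coef_map /= !coefE /=; case: eqP; case: eqP.
rewrite -map_poly_comp; apply: eq_map_poly => x /=.
exact: (rmorph_int (val : {rmorphism Zen n -> algC})).
Qed.

Hypothesis hn : (0 < n)%N.

Lemma shift_Phi : exists q, shift_map n 'Phi_n = q * 'X.
Proof.
suff /factor_theorem [q hq] : root (shift_map n 'Phi_n) 0.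
  by exists q; rewrite hq subr0.
apply/eqP; apply: val_inj => /=.
rewrite -[zen_val _]/(val _) -horner_map map_shift horner_comp !hornerE /=.
exact: (rootP (@Phi_root n hn)).
Qed.
End Shift.

Definition hfun n k (x : E_ring n k) : G_ring n k :=
  in_qpoly (G_mod n k) (shift_map n (x : {poly int})).

Section H.
Variables n k : nat.
Hypotheses (hn : (0 < n)%N) (hk : (0 < k)%N).

Lemma monP : E_mod n k \is monic.
Proof. by apply: monic_exp; exact: Cyclotomic_monic. Qed.

Lemma in_qpolyG_Xk q : in_qpoly (G_mod n k) (q * 'X^k) = 0.
Proof.
apply: val_inj => /=; rewrite /G_mod mk_monic_Xn prednK //.
by rewrite rmodp_mull // monicXn.
Qed.

Lemma shiftP_mod p : in_qpoly (G_mod n k) (shift_map n (p * E_mod n k)) = 0.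
Proof.
have [q hq] := @shift_Phi n hn.
by rewrite shiftM /E_mod shiftX hq exprMn mulrA in_qpolyG_Xk.
Qed.

Lemma key p : in_qpoly (G_mod n k) (shift_map n (rmodp p (E_mod n k)))
  = in_qpoly (G_mod n k) (shift_map n p).
Proof.
by rewrite [in RHS](rdivp_eq monP p) shiftD raddfD /= shiftP_mod add0r.
Qed.

Lemma rmodp_mk q : rmodp q (mk_monic (E_mod n k)) = rmodp q (E_mod n k).
Proof. by rewrite mkE. Qed.

Lemma val_inq p : val (in_qpoly (E_mod n k) p) = rmodp p (E_mod n k).
Proof. by rewrite /= mkE. Qed.

Lemma hfun_in p : hfun n k (in_qpoly (E_mod n k) p) = in_qpoly (G_mod n k) (shift_map n p).
Proof. by rewrite /hfun val_inq key. Qed.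

Lemma hfun_zmod : zmod_morphism (@hfun n k).
Proof.
move=> x y; rewrite /hfun.
have -> : ((x - y : E_ring n k) : {poly int}) = (x : {poly int}) - y by [].
by rewrite shiftB raddfB.
Qed.

Lemma hfun_monoid : monoid_morphism (@hfun n k).
Proof.
split.
  rewrite /hfun.
  have -> : ((1 : E_ring n k) : {poly int}) = 1 by [].
  by rewrite shift1 in_qpoly1.
move=> x y; rewrite /hfun.
have -> : ((x * y : E_ring n k) : {poly int}) = rmodp ((x : {poly int}) * y) (mk_monic (E_mod n k)) by [].
by rewrite rmodp_mk key shiftM in_qpolyM.
Qed.

Definition hm : {rmorphism E_ring n k -> G_ring n k} :=
  HB.pack (@hfun n k) (GRing.isZmodMorphism.Build _ _ _ hfun_zmod)
    (GRing.isMonoidMorphism.Build _ _ _ hfun_monoid).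

End H.

Section Alg.
Variable n : nat.
Hypothesis hn : (0 < n)%N.
Local Notation phi := (totient n).
Local Notation mapC := (map_poly (intr : int -> algC)).

Lemma decomp (a : {poly int}) : a != 0 ->
  exists j c, a = 'Phi_n ^+ j * c /\ ~~ root (mapC c) (e_ n).
Proof.
elim: {a}(size a).+1 {-2}a (ltnSn (size a)) => // N IH a ha a0.
case: (boolP (root (mapC a) (e_ n))) => [ra|nra]; last first.
  by exists 0%N, a; rewrite expr0 mul1r.
have mP := Cyclotomic_monic n.
set q := rdivp a 'Phi_n; set r := rmodp a 'Phi_n.
have Da : a = q * 'Phi_n + r by rewrite /q /r -rdivp_eq.
have r0 : r = 0.
  apply: (@indep n hn).
    rewrite -ltnS -size_Cyclotomic /r ltn_rmodpN0 // monic_neq0 //.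
  move: ra; rewrite Da rmorphD rmorphM /= /root hornerD hornerM.
  have hP : (mapC 'Phi_n).[e_ n] = 0 by apply/rootP; exact: (@Phi_root n hn).
  by rewrite hP mulr0 add0r => /eqP.
rewrite r0 addr0 in Da.
have q0 : q != 0 by apply: contraNneq a0 => q0; rewrite Da q0 mul0r.
have sq : (size q < N)%N.
  rewrite -ltnS; apply: leq_ltn_trans _ ha; rewrite Da mulrC size_monicM // size_Cyclotomic /=.
  by rewrite -{1}(add0n (size q)) ltn_add2r totient_gt0.
have [j [c [Dq nc]]] := IH q sq q0.
exists j.+1, c; split => //.
by rewrite Da Dq mulrAC -exprSr.
Qed.

Lemma sep_factor : exists R : {poly algC},
  mapC 'Phi_n = R * ('X - (e_ n)%:P) /\ ~~ root R (e_ n).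
Proof.
have pe := @e_prim n hn.
have /factor_theorem [R hR] := @Phi_root n hn.
exists R; split => //.
have : separable_poly (mapC 'Phi_n).
  apply: (@dvdp_separable _ ('X^n - 1)); last first.
    by apply: separable_Xn_sub_1; rewrite pnatr_eq0 -lt0n.
  rewrite (Cintr_Cyclotomic pe) -(factor_Xn_sub_1 pe) big_mkord.
  rewrite (bigID (fun k : 'I_n => coprime k n)) /=.
  exact: dvdp_mulIl.
by rewrite hR separable_root => /andP[].
Qed.

Lemma mult_bound (a : {poly int}) k : a != 0 ->
  ('X - (e_ n)%:P) ^+ k %| mapC a -> (size ('Phi_n ^+ k) <= size a)%N.
Proof.
move=> a0 hdiv.
have [j [c [Da nc]]] := decomp _ a0.
case: (leqP k j) => hkj.
  apply: dvdp_leq a0 _; rewrite Da.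
  exact: dvdp_trans (dvdp_exp2l _ hkj) (dvdp_mulIl _ _).
exfalso.
have [R [hR nR]] := sep_factor.
have hmap : mapC ('Phi_n ^+ j * c) = (mapC 'Phi_n) ^+ j * mapC c by rewrite rmorphM rmorphXn.
move: hdiv; rewrite Da hmap hR exprMn -mulrA mulrC -mulrA.
rewrite -(subnKC (ltnW hkj)) exprD dvdp_mul2l; last first.
  by rewrite expf_neq0 // polyXsubC_eq0.
move=> hd.
have nRj : ~~ root (R ^+ j) (e_ n).
  by move: nR; rewrite /root horner_exp expf_eq0 negb_and => ->; rewrite orbT.
have : root (map_poly (intr : int -> algC) c * R ^+ j) (e_ n).
  rewrite root_factor_theorem; apply: dvdp_trans hd.
  by apply: dvdp_exp (dvdpp _); rewrite subn_gt0.
by rewrite rootM (negbTE nc) (negbTE nRj).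
Qed.
End Alg.

Lemma hker n k (hn : (0 < n)%N) (hk : (0 < k)%N) (x : E_ring n k) :
  hfun n k x = 0 -> x = 0.
Proof.
move=> hx.
have sa : (size (val x) < size (E_mod n k))%N.
  by have := size_mk_monic x; rewrite [in X in (_ < X)%N]mkE.
apply: val_inj => /=.
move: sa hx; rewrite /hfun; set a := val x => sa hx.
apply/eqP; apply: contraT => a0.
have : ('X - (e_ n)%:P) ^+ k %| map_poly (intr : int -> algC) a.
  move: hx => /(congr1 val) /=.
  rewrite /G_mod mk_monic_Xn prednK // => hmod.
  have Ds := rdivp_eq (monicXn _ k) (shift_map n a).
  rewrite hmod addr0 in Ds.
  set B := rdivp _ _ in Ds.
  have := congr1 (map_poly (val : Zen n -> algC)) Ds.
  have hm : map_poly (val : Zen n -> algC) (B * 'X^k) = map_poly val B * 'X^k.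
    rewrite rmorphM; congr (_ * _); apply/polyP => i; rewrite coef_map /= !coefXn; by case: (i == k).
  rewrite map_shift hm => hA.
  have -> : map_poly (intr : int -> algC) a
      = (map_poly intr a \Po ('X + (e_ n)%:P)) \Po ('X - (e_ n)%:P).
    by rewrite -comp_polyA comp_polyD comp_polyX comp_polyC subrK comp_polyXr.
  rewrite hA comp_polyM comp_Xn_poly.
  exact: dvdp_mulIr.
move/(@mult_bound n hn a k a0).
by move=> h; move: sa; rewrite ltnNge h.
Qed.

Theorem proposition10 (n k : nat) (hn : (1 <= n)%N) (hk : (1 <= k)%N) :
  (free_Zmod_of_rank (E_ring n k) (k * totient n) /\
   free_Zmod_of_rank (G_ring n k) (k * totient n)) /\
  (exists h : {rmorphism E_ring n k -> G_ring n k},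
     (forall p : {poly int},
        h (in_qpoly (E_mod n k) p) = in_qpoly (G_mod n k) (shift_map n p))
     /\ injective h).
Proof.
split; first by split; [exact: E_free | exact: G_free].
exists (@hm n k hn hk); split.
  by move=> p; exact: (@hfun_in n k hn hk).
apply: raddf_inj => x; exact: (@hker n k hn hk).
Qed.
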